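(* Let $\mathcal{A}_1$ and $\mathcal{A}_2$ be deterministic timed automata over the same alphabet and the same clock set. If $\mathscr{L}_r(\mathcal{A}_1)=\mathscr{L}_r(\mathcal{A}_2)$, then $\mathcal{L}(\mathcal{A}_1)=\mathcal{L}(\mathcal{A}_2)$.
   Context: Let $\Sigma$ be a finite alphabet and $\mathcal{C}=\{c_1,\dots,c_m\}$ a finite set of clocks. A clock constraint is a finite conjunction of atomic constraints $c\sim k$ ($c\in\mathcal{C}$, $k\in\mathbb{N}$, ${\sim}\in\{<,\le,=,\ge,>\}$). A timed automaton is $\mathcal{A}=(\Sigma,L,l_0,F,\mathcal{C},\Delta)$ with finite location set $L$, initial $l_0$, accepting $F\subseteq L$, transitions $\Delta\subseteq L\times\Sigma\times\Phi(\mathcal{C})\times2^{\mathcal{C}}\times L$. A run over a delay-timed word $\omega=(\sigma_1,t_1)\cdots(\sigma_n,t_n)\in(\Sigma\times\mathbb{R}_{\ge0})^*$ is $(l_0,\nu_0)\xrightarrow{t_1,\sigma_1}\cdots\xrightarrow{t_n,\sigma_n}(l_n,\nu_n)$ with $\nu_0\equiv0$ and transitions $(l_{i-1},\sigma_i,\phi_i,\mathcal{B}_i,l_i)\in\Delta$ such that $\nu_{i-1}+t_i$ satisfies $\phi_i$ and $\nu_i$ is $\nu_{i-1}+t_i$ with the clocks of $\mathcal{B}_i$ set to $0$; it is accepting if $l_n\in F$. The timed language $\mathcal{L}(\mathcal{A})$ is the set of delay-timed words having an accepting run. $\mathcal{A}$ is a deterministic timed automaton if every delay-timed word has at most one run.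 The reset-clocked word of such a run is $(\sigma_1,\mathbf{v}_1,\mathbf{b}_1)\cdots(\sigma_n,\mathbf{v}_n,\mathbf{b}_n)$ with $\mathbf{v}_i=\nu_{i-1}+t_i\in\mathbb{R}_{\ge0}^m$ and $\mathbf{b}_{i}\in\{\top,\bot\}^m$, $\mathbf{b}_{i,j}=\top$ iff $c_j\in\mathcal{B}_i$; the reset-clocked language $\mathscr{L}_r(\mathcal{A})$ is the set of reset-clocked words of accepting runs of $\mathcal{A}$. *)

(* Defs.v *)
From mathcomp Require Import all_boot.
From Stdlib Require Import Reals List.
Set Implicit Arguments.
Unset Strict Implicit.
Unset Printing Implicit Defensive.

Definition valuation (m : nat) := 'I_m -> R.

Definition zero_val (m : nat) : valuation m := fun _ => 0%R.

Inductive cmp := CLt | CLe | CEq | CGe | CGt.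

Record atom (m : nat) := Atom { a_clock : 'I_m; a_cmp : cmp; a_const : nat }.

Definition constr (m : nat) := list (atom m).

Definition sat_atom (m : nat) (v : valuation m) (a : atom m) : Prop :=
  let x := v (a_clock a) in
  let k := INR (a_const a) in
  match a_cmp a with
  | CLt => (x < k)%R
  | CLe => (x <= k)%R
  | CEq => x = k
  | CGe => (x >= k)%R
  | CGt => (x > k)%R
  end.

Definition sat (m : nat) (v : valuation m) (phi : constr m) : Prop :=
  forall a, In a phi -> sat_atom v a.

Record trans (Sigma : finType) (m : nat) (L : finType) := Trans {
  t_src : L; t_sym : Sigma; t_guard : constr m; t_reset : {set 'I_m}; t_dst : L }.

Record TA (Sigma : finType) (m : nat) (L : finType) := MkTA {
  ta_init : L;
  ta_final : {set L};
  ta_delta : list (trans Sigma m L) }.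

(* delay-timed words *)
Definition dword (Sigma : finType) := list (Sigma * R).

Definition nonneg_delays (Sigma : finType) (w : dword Sigma) : Prop :=
  forall p, In p w -> (0 <= snd p)%R.

Definition delay (m : nat) (nu : valuation m) (t : R) : valuation m :=
  fun c => (nu c + t)%R.

Definition reset_val (m : nat) (v : valuation m) (B : {set 'I_m}) : valuation m :=
  fun c => if c \in B then 0%R else v c.

Inductive is_run (Sigma : finType) (m : nat) (L : finType) (A : TA Sigma m L) :
  L -> valuation m -> dword Sigma -> list (trans Sigma m L) -> L -> valuation m -> Prop :=
| run_nil : forall l nu, is_run A l nu nil nil l nu
| run_cons : forall l nu s t w tr trs l' nu',
    In tr (ta_delta A) -> t_src tr = l -> t_sym tr = s ->
    sat (delay nu t) (t_guard tr) ->
    is_run A (t_dst tr) (reset_val (delay nu t) (t_reset tr)) w trs l' nu' ->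
    is_run A l nu ((s, t) :: w) (tr :: trs) l' nu'.

Definition timed_lang (Sigma : finType) (m : nat) (L : finType) (A : TA Sigma m L)
  (w : dword Sigma) : Prop :=
  nonneg_delays w /\
  exists trs l' nu', is_run A (ta_init A) (@zero_val m) w trs l' nu' /\ l' \in ta_final A.

(* deterministic: every delay-timed word has at most one run (from the initial
   configuration); a run is determined by its sequence of transitions. *)
Definition deterministic (Sigma : finType) (m : nat) (L : finType) (A : TA Sigma m L) : Prop :=
  forall w trs1 trs2 l1 l2 nu1 nu2,
    nonneg_delays w ->
    is_run A (ta_init A) (@zero_val m) w trs1 l1 nu1 ->
    is_run A (ta_init A) (@zero_val m) w trs2 l2 nu2 ->
    trs1 = trs2.

(* reset-clocked words: letters (sigma, v, b) with v in R^m and b in {T,F}^m *)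
Definition rcword (Sigma : finType) (m : nat) := list (Sigma * valuation m * ('I_m -> bool)).

Fixpoint rc_of_run (Sigma : finType) (m : nat) (L : finType) (nu : valuation m)
  (w : dword Sigma) (trs : list (trans Sigma m L)) : rcword Sigma m :=
  match w, trs with
  | (s, t) :: w', tr :: trs' =>
      (s, delay nu t, fun j => j \in t_reset tr)
        :: rc_of_run (reset_val (delay nu t) (t_reset tr)) w' trs'
  | _, _ => nil
  end.

Definition rc_lang (Sigma : finType) (m : nat) (L : finType) (A : TA Sigma m L)
  (rw : rcword Sigma m) : Prop :=
  exists w trs l' nu',
    nonneg_delays w /\ is_run A (ta_init A) (@zero_val m) w trs l' nu' /\
    l' \in ta_final A /\ rw = rc_of_run (@zero_val m) w trs.

(* Main.v *)
Require Import Defs.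
From mathcomp Require Import all_boot.
From Stdlib Require Import Reals List.

Lemma reset_val_eq (m : nat) (v : valuation m) (B B' : {set 'I_m}) :
  (fun j => j \in B) = (fun j => j \in B') -> reset_val v B = reset_val v B'.
Proof.
move=> E.
change ((fun c => if (fun j => j \in B) c then 0%R else v c) =
        (fun c => if (fun j => j \in B') c then 0%R else v c)).
by rewrite E.
Qed.

Lemma transfer (Sigma : finType) (m : nat) (L1 L2 : finType)
  (A1 : TA Sigma m L1) (A2 : TA Sigma m L2) :
  forall l1 nu w trs1 l1' e1, is_run A1 l1 nu w trs1 l1' e1 ->
  forall l2 w' trs2 l2' e2, is_run A2 l2 nu w' trs2 l2' e2 ->
  rc_of_run nu w trs1 = rc_of_run nu w' trs2 ->
  exists e, is_run A2 l2 nu w trs2 l2' e.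
Proof.
move=> l1 nu w trs1 l1' e1 H1; elim: H1 => {l1 nu w trs1 l1' e1}.
  move=> l nu l2 w' trs2 l2' e2 H2; inversion H2; subst => //= _.
  by exists e2; constructor.
move=> l nu s t w tr trs l' nu' Hin Hsrc Hsym Hsat Hr IH l2 w' trs2 l2' e2 H2.
inversion H2; subst => //= E.
case: E => Es Ed Eb Erest.
have Ev : reset_val (delay nu t) (t_reset tr) = reset_val (delay nu t0) (t_reset tr0).
  by rewrite Ed; apply: reset_val_eq.
rewrite -Ev in H4.
have Er2 : rc_of_run (reset_val (delay nu t) (t_reset tr)) w trs =
  rc_of_run (reset_val (delay nu t) (t_reset tr)) w0 trs0 by rewrite Erest Ev.
have [e He] := IH _ _ _ _ _ H4 Er2.
exists e; rewrite Es; apply: run_cons => //.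
  by rewrite Ed.
have Ev2 : reset_val (delay nu t) (t_reset tr0) = reset_val (delay nu t) (t_reset tr) by rewrite Ev Ed.
by rewrite Ev2.
Qed.

Lemma half (Sigma : finType) (m : nat) (L1 L2 : finType)
  (A1 : TA Sigma m L1) (A2 : TA Sigma m L2) :
  (forall rw, rc_lang A1 rw -> rc_lang A2 rw) ->
  (forall w, timed_lang A1 w -> timed_lang A2 w).
Proof.
move=> H w [Hnn [trs [l' [nu' [Hr Hf]]]]].
have [w' [trs2 [l2 [nu2 [_ [Hr2 [Hf2 E]]]]]]] :
  rc_lang A2 (rc_of_run (@zero_val m) w trs).
  by apply: H; exists w, trs, l', nu'.
have [e He] := @transfer _ _ _ _ A1 A2 _ _ _ _ _ _ Hr _ _ _ _ _ Hr2 E.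
split => //; by exists trs2, l2, e.
Qed.

Theorem theorem4p1 (Sigma : finType) (m : nat) (L1 L2 : finType)
  (A1 : TA Sigma m L1) (A2 : TA Sigma m L2) :
  deterministic A1 -> deterministic A2 ->
  (forall rw, rc_lang A1 rw <-> rc_lang A2 rw) ->
  (forall w, timed_lang A1 w <-> timed_lang A2 w).
Proof.
move=> _ _ H w; split; apply: half => rw; by case: (H rw).
Qed.
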